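(* Let $\mathcal{X}$ be a measurable space, let $(X,Y)$ be a random pair with $X\in\mathcal{X}$, $Y\in\mathbb{R}$, and let $D=(X_i,Y_i)_{i=1}^N$ be an i.i.d. sample distributed as $(X,Y)$. Let $E$ be a linear space of functions $\mathcal{X}\to\mathbb{R}$ equipped with a norm $\Psi$, and let $F\subset E$ be a convex class (with $\mathbb{E}f^2(X)<\infty$ for $f\in F$, $\mathbb{E}Y^2<\infty$); let $f^*\in F$ satisfy $f^*=\operatorname{argmin}_{f\in F}\mathbb{E}(f(X)-Y)^2$. Let $n$ divide $N$, $m=N/n$, and let $I_1,\dots,I_n$ be the natural decomposition of $\{1,\dots,N\}$ into consecutive blocks of cardinality $m$. For $f,h\in F$ and $1\le j\le n$ set $$\mathbb{M}_{f,h}(j)=\frac2m\sum_{i\in I_j}(f-h)(X_i)\,(h(X_i)-Y_i),\qquad \mathbb{B}_{f,h}(j)=\frac1m\sum_{i\in I_j}(f(X_i)-Y_i)^2-\frac1m\sum_{i\in I_j}(h(X_i)-Y_i)^2.$$ Let $\gamma_1,\gamma_2>0$, and let $\rho,r>0$ satisfy $\Delta_F(\rho,r)\ge 4\rho/5$ (with $\Delta_F$ as defined in the context), and let $\lambda$ satisfy $$3\gamma_2\frac{r^2}{\rho}\le\lambda\le\frac{\gamma_1}{2}\frac{r^2}{\rho}.$$ Let $F_\rho=\{f\in F:\Psi(f-f^* )\le\rho\}$, and suppose the sample $D$ satisfies: (1) for every $f\in F_\rho$ with $\|f-f^*\|_{L_2}\ge r$, one has $\mathbb{B}_{f,f^*}(j)\ge\gamma_1\|f-f^*\|_{L_2}^2$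 for at least $0.99n$ of the blocks $j$; (2) for every $f\in F_\rho$ with $\|f-f^*\|_{L_2}<r$, one has $|\mathbb{M}_{f,f^*}(j)-\mathbb{E}\mathbb{M}_{f,f^*}(j)|\le\gamma_2r^2$ for at least $0.99n$ of the blocks $j$. Let $\widetilde f_\lambda\in F$ be a minimizer over $F$ of $$\phi_\lambda(f)=\max_{g\in F}\Big[\mathrm{Med}(\mathbb{B}_{f,g})+\lambda(\Psi(f)-\Psi(g))\Big],$$ where $\mathrm{Med}(\mathbb{B}_{f,g})$ is a median of $(\mathbb{B}_{f,g}(j))_{j=1}^n$. Then $$\Psi(\widetilde f_\lambda-f^* )\le c_1\rho,\qquad \|\widetilde f_\lambda-f^*\|_{L_2}\le c_2r,$$ and $$\mathbb{E}\big((\widetilde f_\lambda(X)-Y)^2\,\big|\,D\big)-\mathbb{E}(f^*(X)-Y)^2\le c_3r^2,$$ where $c_1,c_2,c_3$ depend only on $\gamma_1$ and $\gamma_2$.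
   Context: $\|f\|_{L_2}=(\mathbb{E}f^2(X))^{1/2}$. For a fixed function $f$, $\mathbb{E}\mathbb{M}_{f,f^*}(j)=2\mathbb{E}[(f-f^* )(X)(f^*(X)-Y)]$; $\mathbb{E}(\cdot\mid D)$ denotes expectation over an independent copy $(X,Y)$ with $D$ fixed. For $f\in E$ and $s>0$, $\mathcal{B}_f(s)=\{v\in E:\Psi(v-f)\le s\}$ is the $\Psi$-ball centred at $f$. Let $S_{\Psi^*}$ be the unit sphere of the dual space of $(E,\Psi)$, i.e. linear functionals $z$ on $E$ with $\sup_{\Psi(x)=1}|z(x)|=1$; $z\in S_{\Psi^*}$ is norming for $v\in E$ if $z(v)=\Psi(v)$. For $f\in F$, $\Gamma_f(\rho)\subset S_{\Psi^*}$ is the set of functionals that are norming for some $v\in\mathcal{B}_f(\rho/20)$, and $$\Delta_F(\rho,r)=\inf_{f\in F}\ \inf_{h}\ \sup_{z\in\Gamma_f(\rho)} z(h-f),$$ where the inner infimum is over $h\in F$ with $\Psi(h-f)=\rho$ and $\|h-f\|_{L_2}\le r$. *)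

(* Defs.v *)
From mathcomp Require Import all_boot all_order all_algebra.
From mathcomp Require Import all_classical all_reals all_analysis.
Set Implicit Arguments. Unset Strict Implicit. Unset Printing Implicit Defensive.
Import Order.TTheory GRing.Theory Num.Theory.
Local Open Scope classical_set_scope.
Local Open Scope ring_scope.

Definition fsub {T : Type} {R : realType} (u v : T -> R) : T -> R :=
  fun x => u x - v x.

Definition linear_space {T : Type} {R : realType} (E : set (T -> R)) : Prop :=
  E (fun _ => 0) /\
  (forall u v, E u -> E v -> E (fun x => u x + v x)) /\
  (forall (a : R) u, E u -> E (fun x => a * u x)).

Definition is_norm_on {T : Type} {R : realType} (E : set (T -> R))
    (Psi : (T -> R) -> R) : Prop :=
  (forall v, E v -> 0 <= Psi v) /\
  (forall v, E v -> Psi v = 0 -> v = (fun _ => 0)) /\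
  (forall (a : R) v, E v -> Psi (fun x => a * v x) = `|a| * Psi v) /\
  (forall u v, E u -> E v -> Psi (fun x => u x + v x) <= Psi u + Psi v).

Definition convex_class {T : Type} {R : realType} (F : set (T -> R)) : Prop :=
  forall f g (t : R), F f -> F g -> 0 <= t <= 1 ->
    F (fun x => t * f x + (1 - t) * g x).

Definition dual_sphere {T : Type} {R : realType} (E : set (T -> R))
    (Psi : (T -> R) -> R) : set ((T -> R) -> R) :=
  [set z | (forall (a b : R) u v, E u -> E v ->
              z (fun x => a * u x + b * v x) = a * z u + b * z v) /\
           has_sup [set `|z x| | x in [set x | E x /\ Psi x = 1]] /\
           sup [set `|z x| | x in [set x | E x /\ Psi x = 1]] = 1].

Definition psi_ball {T : Type} {R : realType} (E : set (T -> R))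
    (Psi : (T -> R) -> R) (f : T -> R) (s : R) : set (T -> R) :=
  [set v | E v /\ Psi (fsub v f) <= s].

Definition Gamma {T : Type} {R : realType} (E : set (T -> R))
    (Psi : (T -> R) -> R) (f : T -> R) (rho : R) : set ((T -> R) -> R) :=
  [set z | dual_sphere E Psi z /\
           exists v, psi_ball E Psi f (rho / 20) v /\ z v = Psi v].

Definition L2norm {dO : measure_display} {Om : measurableType dO} {R : realType}
    (P : probability Om R) {T : Type} (X : Om -> T) (f : T -> R) : R :=
  Num.sqrt (fine (\int[P]_w ((f (X w)) ^+ 2)%:E)).

(* Delta_F(rho, r) as an extended real (inf over empty set = +oo) *)
Definition DeltaF {T : Type} {R : realType} (E : set (T -> R))
    (Psi : (T -> R) -> R) (L2 : (T -> R) -> R) (F : set (T -> R))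
    (rho r : R) : \bar R :=
  ereal_inf [set
    ereal_inf [set
      ereal_sup [set (z (fsub h f))%:E | z in Gamma E Psi f rho]
    | h in [set h | F h /\ Psi (fsub h f) = rho /\ L2 (fsub h f) <= r]]
  | f in F].

Definition risk {dO : measure_display} {Om : measurableType dO} {R : realType}
    (P : probability Om R) {T : Type} (X : Om -> T) (Y : Om -> R)
    (f : T -> R) : \bar R :=
  \int[P]_w ((f (X w) - Y w) ^+ 2)%:E.

Definition EMstat {dO : measure_display} {Om : measurableType dO} {R : realType}
    (P : probability Om R) {T : Type} (X : Om -> T) (Y : Om -> R)
    (f h : T -> R) : R :=
  2 * fine (\int[P]_w (((f (X w) - h (X w)) * (h (X w) - Y w))%:E)).

(* Blocks: with m = N %/ n, block j (0-indexed) is {i < N | i %/ m = j},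
   i.e. the consecutive indices j*m, ..., j*m + m - 1. *)
Definition Mstat {T : Type} {R : realType} (N n : nat) (xs : 'I_N -> T)
    (ys : 'I_N -> R) (f h : T -> R) (j : 'I_n) : R :=
  2 / (N %/ n)%:R *
    \sum_(i < N | (i %/ (N %/ n))%N == j) (f (xs i) - h (xs i)) * (h (xs i) - ys i).

Definition Bstat {T : Type} {R : realType} (N n : nat) (xs : 'I_N -> T)
    (ys : 'I_N -> R) (f h : T -> R) (j : 'I_n) : R :=
  1 / (N %/ n)%:R * \sum_(i < N | (i %/ (N %/ n))%N == j) (f (xs i) - ys i) ^+ 2
  - 1 / (N %/ n)%:R * \sum_(i < N | (i %/ (N %/ n))%N == j) (h (xs i) - ys i) ^+ 2.

Definition is_median {R : realType} (n : nat) (v : 'I_n -> R) (M : R) : Prop :=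
  (n%:R / 2 : R) <= (#|[pred j : 'I_n | v j <= M]|%:R : R) /\
  (n%:R / 2 : R) <= (#|[pred j : 'I_n | M <= v j]|%:R : R).

Definition phi {T : Type} {R : realType} (F : set (T -> R))
    (Psi : (T -> R) -> R) (lam : R) (med : (T -> R) -> (T -> R) -> R)
    (f : T -> R) : \bar R :=
  ereal_sup [set (med f g + lam * (Psi f - Psi g))%:E | g in F].

(* Main.v *)
Require Import Defs.
From mathcomp Require Import all_boot all_order all_algebra.
From mathcomp Require Import all_classical all_reals all_analysis.
From mathcomp Require Import ring lra measurable_realfun.
Set Implicit Arguments. Unset Strict Implicit. Unset Printing Implicit Defensive.
Import Order.TTheory GRing.Theory Num.Theory.
Local Open Scope classical_set_scope.
Local Open Scope ring_scope.

Lemma count_inter (R : realType) (n : nat) (A B : pred 'I_n) :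
  (0 < n)%N ->
  (99 / 100) * (n%:R : R) <= (#|A|%:R : R) ->
  (n%:R / 2 : R) <= (#|B|%:R : R) ->
  exists j, A j /\ B j.
Proof.
move=> n0 hA hB.
have hU := cardUI A B.
have hM := max_card [predU A & B]; rewrite card_ord in hM.
have : (0 < #|[predI A & B]|)%N.
  rewrite lt0n; apply/negP => /eqP h0.
  rewrite h0 addn0 in hU.
  have : (#|A| + #|B| <= n)%N by rewrite -hU.
  rewrite -(ler_nat R) natrD => hle.
  have hn : (0 : R) < n%:R by rewrite ltr0n.
  lra.
case/card_gt0P => j; rewrite inE => /andP[? ?]; by exists j.
Qed.

Definition Qs {T : Type} {R : realType} (N n : nat) (xs : 'I_N -> T)
    (f h : T -> R) (j : 'I_n) : R :=
  1 / (N %/ n)%:R *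
    \sum_(i < N | (i %/ (N %/ n))%N == j) (f (xs i) - h (xs i)) ^+ 2.

Section blocks.
Variables (T : Type) (R : realType) (N n : nat) (xs : 'I_N -> T) (ys : 'I_N -> R).
Implicit Types f g h : T -> R.

Lemma Qs_ge0 f h (j : 'I_n) : 0 <= Qs (n:=n) xs f h j.
Proof.
rewrite /Qs; apply: mulr_ge0; first by rewrite div1r invr_ge0.
by apply: sumr_ge0 => i _; exact: sqr_ge0.
Qed.

Lemma B_QM f h (j : 'I_n) :
  Bstat xs ys f h j = Qs xs f h j + Mstat xs ys f h j.
Proof.
rewrite /Bstat /Qs /Mstat.
set c := (N %/ n)%:R.
set S1 := \sum_(i < N | _) (f (xs i) - ys i) ^+ 2.
set S2 := \sum_(i < N | _) (h (xs i) - ys i) ^+ 2.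
set S3 := \sum_(i < N | _) (f (xs i) - h (xs i)) ^+ 2.
set S4 := \sum_(i < N | _) (f (xs i) - h (xs i)) * (h (xs i) - ys i).
have -> : S1 = S3 + 2 * S4 + S2.
  rewrite /S1 /S2 /S3 /S4 mulr_sumr -!big_split /=.
  by apply: eq_bigr => i _; ring.
rewrite !div1r; ring.
Qed.

Lemma B_diff f g h (j : 'I_n) :
  Bstat xs ys f g j = Bstat xs ys f h j - Bstat xs ys g h j.
Proof. rewrite /Bstat; ring. Qed.

Lemma Qs_scale (t : R) f h (j : 'I_n) :
  Qs xs (fun x => t * f x + (1 - t) * h x) h j = t ^+ 2 * Qs xs f h j.
Proof.
rewrite /Qs [RHS]mulrCA; congr (_ * _); rewrite mulr_sumr; apply: eq_bigr => i _; ring.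
Qed.

Lemma Ms_scale (t : R) f h (j : 'I_n) :
  Mstat xs ys (fun x => t * f x + (1 - t) * h x) h j = t * Mstat xs ys f h j.
Proof.
rewrite /Mstat [RHS]mulrCA; congr (_ * _); rewrite mulr_sumr; apply: eq_bigr => i _; ring.
Qed.

End blocks.

Section normlemmas.
Variables (T : Type) (R : realType) (E : set (T -> R)) (Psi : (T -> R) -> R).
Hypotheses (hE : linear_space E) (hN : is_norm_on E Psi).
Implicit Types f g u v : T -> R.

Lemma E_lin (a b : R) u v : E u -> E v -> E (fun x => a * u x + b * v x).
Proof.
case: hE => _ [hD hZ] Eu Ev.
by apply: (hD (fun x => a * u x) (fun x => b * v x)); apply: hZ.
Qed.

Lemma E_fsub u v : E u -> E v -> E (fsub u v).
Proof.
move=> Eu Ev; have -> : fsub u v = (fun x => 1 * u x + (-1) * v x).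
  by apply: funext => x; rewrite /fsub; ring.
exact: E_lin.
Qed.

Lemma Psi_scale (a : R) v : E v -> 0 <= a -> Psi (fun x => a * v x) = a * Psi v.
Proof. by case: hN => _ [_ [hZ _]] Ev a0; rewrite hZ // ger0_norm. Qed.

Lemma Psi_Z (a : R) v : E v -> Psi (fun x => a * v x) = `|a| * Psi v.
Proof. by case: hN => _ [_ [hZ _]] Ev; exact: hZ. Qed.

Lemma Psi_fsubC u v : E u -> E v -> Psi (fsub u v) = Psi (fsub v u).
Proof.
case: hN => _ [_ [hZ _]] Eu Ev.
have -> : fsub v u = (fun x => (-1) * fsub u v x).
  by apply: funext => x; rewrite /fsub; ring.
have h := hZ (-1) (fsub u v) (E_fsub Eu Ev).
by rewrite normrN1 mul1r in h; rewrite h.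
Qed.

Lemma Psi_tri u v : E u -> E v -> Psi u <= Psi v + Psi (fsub u v).
Proof.
case: hN => _ [_ [_ hT]] Eu Ev.
have {1}-> : u = (fun x => v x + fsub u v x).
  by apply: funext => x; rewrite /fsub; ring.
by apply: hT => //; exact: E_fsub.
Qed.

Lemma Psi_ge0 v : E v -> 0 <= Psi v.
Proof. by case: hN => h _; exact: h. Qed.

Lemma Psi_conv (t : R) f g : E f -> E g -> 0 <= t <= 1 ->
  Psi (fun x => t * f x + (1 - t) * g x) <= t * Psi f + (1 - t) * Psi g.
Proof.
case: hN => _ [_ [_ hT]] Ef Eg /andP[t0 t1].
have t1' : 0 <= 1 - t by rewrite subr_ge0.
rewrite -(Psi_scale Ef t0) -(Psi_scale Eg t1').
by apply: (hT (fun x => t * f x) (fun x => (1 - t) * g x)); case: hE => _ [_ hZ]; apply: hZ.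
Qed.

Lemma fsub_conv (t : R) f g :
  fsub (fun x => t * f x + (1 - t) * g x) g = (fun x => t * fsub f g x).
Proof. by apply: funext => x; rewrite /fsub; ring. Qed.

Lemma dual_le z x : dual_sphere E Psi z -> E x -> z x <= Psi x.
Proof.
case=> zlin [hs hsup] Ex.
have z0 : z (fun _ => 0) = 0.
  have := zlin 0 0 x x Ex Ex.
  have -> : (fun y => 0 * x y + 0 * x y) = (fun _ => 0 : R).
    by apply: funext => y; ring.
  by move=> ->; ring.
have [px0|px0] := eqVneq (Psi x) 0.
  by case: hN => _ [h0 _]; rewrite px0 (h0 x Ex px0) z0.
have ppos : 0 < Psi x by rewrite lt0r px0 Psi_ge0.
set a := (Psi x)^-1.
have a0 : 0 <= a by rewrite invr_ge0 ltW.
have Ex' : E (fun y => a * x y) by case: hE => _ [_ hZ]; apply: hZ.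
have Px' : Psi (fun y => a * x y) = 1 by rewrite Psi_scale // mulVf.
have zx' : z (fun y => a * x y) = a * z x.
  have := zlin a 0 x x Ex Ex.
  have -> : (fun y => a * x y + 0 * x y) = (fun y => a * x y).
    by apply: funext => y; ring.
  by move=> ->; ring.
have : `|z (fun y => a * x y)| <= 1.
  rewrite -hsup; apply: sup_upper_bound => //.
  by exists (fun y => a * x y).
rewrite zx' normrM ger0_norm // => h.
have e : `|z x| = Psi x * (a * `|z x|).
  by rewrite mulrA mulfV ?mul1r // lt0r_neq0.
apply: le_trans (ler_norm _) _; rewrite e -{2}[Psi x]mulr1.
by rewrite ler_wpM2l // ltW.
Qed.

End normlemmas.

Section analysis.
Context (dO : measure_display) (Om : measurableType dO) (R : realType)
  (P : probability Om R).

Definition V (a : Om -> R) := measurable_fun setT a /\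
  P.-integrable setT (EFin \o (fun w => a w ^+ 2)).

Lemma V_lin (al be : R) a b : V a -> V b -> V (fun w => al * a w + be * b w).
Proof.
move=> [ma ia] [mb ib]; split.
  apply: measurable_funD; apply: measurable_funM => //; exact: measurable_cst.
apply: (le_integrable measurableT
  (f := EFin \o (fun w => (al * a w + be * b w) ^+ 2))
  (g := fun w => ((2 * al ^+ 2)%R%:E * (EFin \o (fun w => (a w ^+ 2)%R)) w +
                 (2 * be ^+ 2)%R%:E * (EFin \o (fun w => (b w ^+ 2)%R)) w)%E)).
- apply/measurable_EFinP; apply: measurable_funX.
  apply: measurable_funD; apply: measurable_funM => //; exact: measurable_cst.
- move=> w _ /=; rewrite ?abse_EFin lee_fin.
  have h1 := sqr_ge0 (al * a w); have h2 := sqr_ge0 (be * b w).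
  have h3 := sqr_ge0 (al * a w - be * b w).
  rewrite ger0_norm ?sqr_ge0 // ger0_norm; last by nra.
  nra.
- apply: (integrableD measurableT (f := fun w => ((2 * al ^+ 2)%R%:E * (EFin \o (fun w => (a w ^+ 2)%R)) w)%E)
    (g := fun w => ((2 * be ^+ 2)%R%:E * (EFin \o (fun w => (b w ^+ 2)%R)) w)%E)) => //;
  exact: integrableZl.
Qed.

Lemma V_mul a b : V a -> V b -> P.-integrable setT (EFin \o (fun w => a w * b w)).
Proof.
move=> [ma ia] [mb ib].
apply: (le_integrable measurableT
  (f := EFin \o (fun w => a w * b w))
  (g := fun w => ((EFin \o (fun w => (a w ^+ 2)%R)) w + (EFin \o (fun w => (b w ^+ 2)%R)) w)%E)).
- by apply/measurable_EFinP; apply: measurable_funM.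
- move=> w _ /=; rewrite ?abse_EFin lee_fin.
  rewrite [`|_ + _|]ger0_norm; last by apply: addr_ge0; rewrite sqr_ge0.
  rewrite ler_norml; apply/andP; split; nra.
- exact: (integrableD measurableT (f := EFin \o (fun w => a w ^+ 2))
    (g := EFin \o (fun w => b w ^+ 2))).
Qed.

Definition RI (a : Om -> R) := Rintegral P setT a.

Lemma RI_expand u d : V u -> V d ->
  RI (fun w => (u w + d w) ^+ 2) =
  RI (fun w => u w ^+ 2) + 2 * RI (fun w => u w * d w) + RI (fun w => d w ^+ 2).
Proof.
move=> Vu Vd; rewrite /RI.
have -> : (fun w => (u w + d w) ^+ 2) =
   (fun w => u w ^+ 2 + (2 * (u w * d w) + d w ^+ 2)).
  by apply: funext => w; ring.
have iu := proj2 Vu; have id := proj2 Vd; have iud := V_mul Vu Vd.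
have i2 : P.-integrable setT (EFin \o (fun w => 2 * (u w * d w))).
  apply: (eq_integrable measurableT (fun w => ((2%R)%:E * (EFin \o (fun w => (u w * d w)%R)) w)%E)); last exact: integrableZl.
  by move=> w _ /=; rewrite EFinM.
have i3 : P.-integrable setT (EFin \o (fun w => 2 * (u w * d w) + d w ^+ 2)).
  apply: (eq_integrable measurableT (((EFin \o (fun w => (2 * (u w * d w))%R)) \+
     (EFin \o (fun w => (d w ^+ 2)%R)))%E)); last exact: integrableD.
  by move=> w _ /=; rewrite EFinD.
rewrite RintegralD // RintegralD // RintegralZl //; ring.
Qed.

Lemma RI_scale2 (t : R) u : V u ->
  RI (fun w => (t * u w) ^+ 2) = t ^+ 2 * RI (fun w => u w ^+ 2).
Proof.
move=> Vu; rewrite /RI -RintegralZl //; last exact: (proj2 Vu).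
by congr Rintegral; apply: funext => w; ring.
Qed.

Lemma RI_scale1 (t : R) u d : V u -> V d ->
  RI (fun w => (t * u w) * d w) = t * RI (fun w => u w * d w).
Proof.
move=> Vu Vd; rewrite /RI -RintegralZl //; last exact: V_mul.
by congr Rintegral; apply: funext => w; ring.
Qed.

Lemma RI_sq_ge0 u : 0 <= RI (fun w => u w ^+ 2).
Proof. by apply: Rintegral_ge0 => w _; exact: sqr_ge0. Qed.

Lemma RI_fin u : V u ->
  (\int[P]_w ((u w) ^+ 2)%:E)%E = (RI (fun w => u w ^+ 2))%:E.
Proof.
move=> Vu; rewrite /RI /Rintegral fineK //.
exact: (integrable_fin_num measurableT (proj2 Vu)).
Qed.

End analysis.


Definition Good (R : realType) (n : nat) (p : pred 'I_n) : Prop :=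
  (99 / 100) * (n%:R : R) <= (#|p|%:R : R).

Lemma Good_mono (R : realType) n (p q : pred 'I_n) :
  Good R p -> (forall j, p j -> q j) -> Good R q.
Proof.
rewrite /Good => hp hpq; apply: le_trans hp _; rewrite ler_nat.
apply: subset_leq_card; apply/fintype.subsetP => j; rewrite !unfold_in; exact: hpq.
Qed.

Lemma med_low (R : realType) n (v : 'I_n -> R) m (p : pred 'I_n) :
  (0 < n)%N -> is_median v m -> Good R p -> exists j, p j /\ v j <= m.
Proof.
move=> n0 [h1 _] hp.
have [j [pj vj]] := count_inter n0 hp h1.
by exists j; split.
Qed.

Lemma med_high (R : realType) n (v : 'I_n -> R) m (p : pred 'I_n) :
  (0 < n)%N -> is_median v m -> Good R p -> exists j, p j /\ m <= v j.
Proof.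
move=> n0 [_ h2] hp.
have [j [pj vj]] := count_inter n0 hp h2.
by exists j; split.
Qed.

Lemma B_neg (T : Type) (R : realType) N n (xs : 'I_N -> T) (ys : 'I_N -> R)
  (f g : T -> R) (j : 'I_n) : Bstat xs ys f g j = - Bstat xs ys g f j.
Proof. rewrite /Bstat; ring. Qed.

Lemma B_scale (T : Type) (R : realType) N n (xs : 'I_N -> T) (ys : 'I_N -> R)
  (f h : T -> R) (j : 'I_n) (t : R) : 0 < t <= 1 ->
  Bstat xs ys (fun x => t * f x + (1 - t) * h x) h j <= t * Bstat xs ys f h j.
Proof.
move=> /andP[t0 t1].
rewrite !B_QM Qs_scale Ms_scale.
have hq := Qs_ge0 xs f h j.
set Q := Qs xs f h j; set M := Mstat xs ys f h j.
have : 0 <= t * (1 - t) * Q by rewrite mulr_ge0 // mulr_ge0 // ?subr_ge0 // ltW.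
nra.
Qed.


Unset Implicit Arguments.
Set Strict Implicit.

Theorem theorem2 (R : realType) (g1 g2 : R) :
  0 < g1 -> 0 < g2 ->
  exists c1 c2 c3 : R,
  forall (dT : measure_display) (T : measurableType dT)
    (dO : measure_display) (Om : measurableType dO) (P : probability Om R)
    (X : Om -> T) (Y : Om -> R)
    (E : set (T -> R)) (Psi : (T -> R) -> R) (F : set (T -> R)) (fs : T -> R)
    (N n : nat) (xs : 'I_N -> T) (ys : 'I_N -> R)
    (rho r lam : R) (med : (T -> R) -> (T -> R) -> R) (ft : T -> R),
  measurable_fun setT X -> measurable_fun setT Y ->
  linear_space E -> is_norm_on E Psi -> F `<=` E -> convex_class F ->
  (forall f, F f -> measurable_fun setT f) ->
  (forall f, F f -> P.-integrable setT (fun w => ((f (X w)) ^+ 2)%:E)) ->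
  P.-integrable setT (fun w => ((Y w) ^+ 2)%:E) ->
  F fs -> (forall f, F f -> (risk P X Y fs <= risk P X Y f)%E) ->
  (0 < N)%N -> (0 < n)%N -> (n %| N)%N ->
  0 < rho -> 0 < r ->
  ((4 * rho / 5)%:E <= DeltaF E Psi (L2norm P X) F rho r)%E ->
  3 * g2 * (r ^+ 2 / rho) <= lam <= g1 / 2 * (r ^+ 2 / rho) ->
  (* condition (1) *)
  (forall f, F f -> Psi (fsub f fs) <= rho -> r <= L2norm P X (fsub f fs) ->
     (99 / 100) * (n%:R : R) <=
     (#|[pred j : 'I_n | g1 * (L2norm P X (fsub f fs)) ^+ 2 <= Bstat xs ys f fs j]|%:R : R)) ->
  (* condition (2) *)
  (forall f, F f -> Psi (fsub f fs) <= rho -> L2norm P X (fsub f fs) < r ->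
     (99 / 100) * (n%:R : R) <=
     (#|[pred j : 'I_n | `|Mstat xs ys f fs j - EMstat P X Y f fs| <= g2 * r ^+ 2]|%:R : R)) ->
  (* med f g is a median of (B_{f,g}(j))_j *)
  (forall f g, F f -> F g -> is_median (Bstat (n := n) xs ys f g) (med f g)) ->
  (* ft minimizes phi_lambda over F *)
  F ft -> (forall f, F f -> (phi F Psi lam med ft <= phi F Psi lam med f)%E) ->
  Psi (fsub ft fs) <= c1 * rho /\
  L2norm P X (fsub ft fs) <= c2 * r /\
  (risk P X Y ft - risk P X Y fs <= (c3 * r ^+ 2)%:E)%E.
Proof.
move=> g1p g2p.
pose K := g2 + g1 / 2.
pose c1 := 1 + 2 * K / g1 + 2 * K / g2.
pose c2 := 1 + g2 / g1 + 2 * K / g1 + 2 * K / g2.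
exists c1, c2, (c2 ^+ 2 + K + g1 * c1 / 2 + 2 * (c1 + c2) * g2).
move=> dT T dO Om P X Y E Psi F fs N n xs ys rho r lam med ft
  mX mY hE hN FE cF mF iF iY Ffs hmin N0 n0 ndiv rho0 r0 hDelta
  /andP[lamlo lamhi] H1 H2 hmed Fft hphi.
have Kp : 0 < K by rewrite /K; lra.
have r2p : 0 < r ^+ 2 by rewrite exprn_gt0.
have qE : r ^+ 2 / rho * rho = r ^+ 2 by rewrite divfK // lt0r_neq0.
have lamrho_hi : lam * rho <= g1 / 2 * r ^+ 2.
  rewrite -qE mulrA; apply: ler_wpM2r; [exact: ltW|exact: lamhi].
have lamrho_lo : 3 * g2 * r ^+ 2 <= lam * rho.
  rewrite -qE mulrA; apply: ler_wpM2r; [exact: ltW|exact: lamlo].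
have lam0 : 0 <= lam.
  have : 0 < lam * rho by apply: lt_le_trans lamrho_lo; rewrite !mulr_gt0.
  by rewrite pmulr_lgt0 // => /ltW.
pose hc := fun (t : R) (f : T -> R) => fun x => t * f x + (1 - t) * fs x.
have Fhc : forall t f, F f -> 0 <= t <= 1 -> F (hc t f).
  by move=> t f Ff ht; apply: cF.
have Efs := FE fs Ffs.
have VX : forall f, F f -> V P (fun w => f (X w)).
  by move=> f Ff; split; [exact: measurableT_comp (mF f Ff) mX | exact: iF].
have VY : V P Y by split.
have Vsub : forall a b, V P a -> V P b -> V P (fun w => a w - b w).
  move=> a b Va Vb.
  have -> : (fun w => a w - b w) = (fun w => 1 * a w + (-1) * b w).
    by apply: funext => w; ring.
  exact: V_lin.
have Vu : forall f, F f -> V P (fun w => f (X w) - fs (X w)).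
  by move=> f Ff; apply: Vsub; apply: VX.
have Vd : V P (fun w => fs (X w) - Y w) by apply: Vsub => //; apply: VX.
pose Iuu := fun f : T -> R => RI P (fun w => (f (X w) - fs (X w)) ^+ 2).
pose Iud := fun f : T -> R => RI P (fun w => (f (X w) - fs (X w)) * (fs (X w) - Y w)).
pose Idd := RI P (fun w => (fs (X w) - Y w) ^+ 2).
have riskE : forall f, F f -> risk P X Y f = (Iuu f + 2 * Iud f + Idd)%:E.
  move=> f Ff.
  have Vfy : V P (fun w => f (X w) - Y w) by apply: Vsub => //; apply: VX.
  have -> : risk P X Y f = (RI P (fun w => (f (X w) - Y w) ^+ 2))%:E.
    exact: (RI_fin Vfy).
  have -> : (fun w => (f (X w) - Y w) ^+ 2) =
      (fun w => ((f (X w) - fs (X w)) + (fs (X w) - Y w)) ^+ 2).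
    by apply: funext => w; congr (_ ^+ 2); ring.
  by rewrite (RI_expand (Vu f Ff) Vd).
have riskfs : risk P X Y fs = Idd%:E by exact: (RI_fin Vd).
have Iuu_hc : forall t f, F f -> Iuu (hc t f) = t ^+ 2 * Iuu f.
  move=> t f Ff; rewrite /Iuu -(RI_scale2 t (Vu f Ff)); congr RI.
  by apply: funext => w; rewrite /hc; congr (_ ^+ 2); ring.
have Iud_hc : forall t f, F f -> Iud (hc t f) = t * Iud f.
  move=> t f Ff; rewrite /Iud -(RI_scale1 t (Vu f Ff) Vd); congr RI.
  by apply: funext => w; rewrite /hc; ring.
have Iuu0 : forall f, 0 <= Iuu f by move=> f; exact: RI_sq_ge0.
have Iud0 : forall f, F f -> 0 <= Iud f.
  move=> f Ff.
  have key : forall t, 0 < t <= 1 -> 0 <= t ^+ 2 * Iuu f + 2 * (t * Iud f).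
    move=> t /andP[t0 t1].
    have Fh : F (hc t f) by apply: Fhc => //; rewrite (ltW t0) t1.
    have := hmin _ Fh; rewrite riskfs riskE // lee_fin Iuu_hc // Iud_hc //.
    lra.
  rewrite leNgt; apply/negP => hneg.
  have ha := Iuu0 f.
  have Dp : 0 < Iuu f - Iud f by lra.
  pose t := - Iud f / (Iuu f - Iud f).
  have t0 : 0 < t by rewrite /t divr_gt0 // oppr_gt0.
  have t1 : t <= 1 by rewrite /t ler_pdivrMr // mul1r; lra.
  have tD : t * (Iuu f - Iud f) = - Iud f by rewrite /t divfK // lt0r_neq0.
  have := key t; rewrite t0 t1 => /(_ isT) hk.
  have : t * Iuu f = - Iud f + t * Iud f by lra.
  nra.

have EME : forall f, EMstat P X Y f fs = 2 * Iud f by [].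
have L2E : forall f, L2norm P X (fsub f fs) = Num.sqrt (Iuu f) by [].
have L2sq : forall f, L2norm P X (fsub f fs) ^+ 2 = Iuu f.
  by move=> f; rewrite L2E sqr_sqrtr // Iuu0.
have L2ge0 : forall f, 0 <= L2norm P X (fsub f fs).
  by move=> f; rewrite L2E sqrtr_ge0.
have L2hc : forall t f, F f -> 0 <= t ->
    L2norm P X (fsub (hc t f) fs) = t * L2norm P X (fsub f fs).
  move=> t f Ff t0; rewrite !L2E Iuu_hc // sqrtrM ?sqr_ge0 // sqrtr_sqr.
  by rewrite ger0_norm.
have lowB : forall g, F g -> Psi (fsub g fs) <= rho ->
    Good R [pred j : 'I_n | - (g2 * r ^+ 2) <= Bstat xs ys g fs j].
  move=> g Fg hp; case: (leP r (L2norm P X (fsub g fs))) => hL.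
    apply: Good_mono (H1 g Fg hp hL) _ => j /= hj.
    have : 0 <= g1 * L2norm P X (fsub g fs) ^+ 2 by rewrite mulr_ge0 ?sqr_ge0 // ltW.
    have : 0 <= g2 * r ^+ 2 by rewrite mulr_ge0 // ltW.
    lra.
  apply: Good_mono (H2 g Fg hp hL) _ => j /=.
  rewrite ler_norml => /andP[hlo _].
  rewrite B_QM; have := Qs_ge0 xs g fs j; have := Iud0 g Fg.
  rewrite EME in hlo; lra.
have medUB : forall g, F g -> forall a,
    Good R [pred j : 'I_n | a <= Bstat xs ys g fs j] -> med fs g <= - a.
  move=> g Fg a hG.
  have [j [hj hm]] := med_high n0 (hmed fs g Ffs Fg) hG.
  rewrite B_neg in hm; move: hj => /= hj; lra.
have medLB : forall f, F f -> forall a,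
    Good R [pred j : 'I_n | a <= Bstat xs ys f fs j] -> a <= med f fs.
  move=> f Ff a hG.
  have [j [hj hm]] := med_low n0 (hmed f fs Ff Ffs) hG.
  move: hj => /= hj; lra.
have far : forall g, F g -> rho < Psi (fsub g fs) ->
  exists t Ti, [/\ 0 < t, t <= 1, Ti * t = 1, Psi (fsub g fs) = rho * Ti & 1 <= Ti] /\
   [/\ F (hc t g), Psi (fsub (hc t g) fs) = rho,
       L2norm P X (fsub (hc t g) fs) = t * L2norm P X (fsub g fs) &
       forall a, Good R [pred j : 'I_n | a <= Bstat xs ys (hc t g) fs j] ->
         Good R [pred j : 'I_n | a * Ti <= Bstat xs ys g fs j]].
  move=> g Fg hp.
  have Eg := FE g Fg.
  set p := Psi (fsub g fs) in hp *.
  have p0 : 0 < p by apply: lt_trans hp.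
  exists (rho / p), (p / rho).
  have t0 : 0 < rho / p by rewrite divr_gt0.
  have t1 : rho / p <= 1 by rewrite ler_pdivrMr // mul1r ltW.
  have tt : p / rho * (rho / p) = 1.
    by rewrite mulrA divfK ?lt0r_neq0 // mulfV // lt0r_neq0.
  have pE : p = rho * (p / rho) by rewrite mulrC divfK // lt0r_neq0.
  have Ti1 : 1 <= p / rho by rewrite ler_pdivlMr // mul1r ltW.
  have trange : 0 <= rho / p <= 1 by rewrite (ltW t0) t1.
  split; first by split.
  split.
  - exact: Fhc.
  - rewrite /hc fsub_conv (Psi_scale hN (E_fsub hE Eg Efs) (ltW t0)).
    by rewrite -/p divfK // lt0r_neq0.
  - by apply: L2hc => //; exact: ltW.
  - move=> a hG; apply: Good_mono hG _ => j /= hj.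
    have hs := B_scale xs ys g fs j (t:=rho / p); rewrite t0 t1 in hs.
    have hs' := hs isT.
    have : a <= rho / p * Bstat xs ys g fs j by apply: le_trans hj hs'.
    move=> h2.
    have h3 := ler_wpM2r (ltW (lt_le_trans ltr01 Ti1)) h2.
    apply: le_trans h3 _.
    by rewrite [X in X <= _]mulrC mulrA tt mul1r.

have Dl : forall g, F g -> forall t, 0 < t <= 1 ->
    Psi (fsub (hc t g) fs) = rho -> L2norm P X (fsub (hc t g) fs) <= r ->
    rho / 2 <= t * (Psi g - Psi fs).
  move=> g Fg t /andP[t0 t1] hPsi hL.
  have Eg := FE g Fg.
  have Fhh : F (hc t g) by apply: Fhc => //; rewrite (ltW t0) t1.
  have Ehh := FE _ Fhh.
  have hD1 : ((4 * rho / 5)%:E <=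
      ereal_sup [set (z (fsub (hc t g) fs))%:E | z in Gamma E Psi fs rho])%E.
    apply: (le_trans hDelta); rewrite /DeltaF.
    apply: le_trans; first by apply: ereal_inf_lbound; exists fs.
    apply: ereal_inf_lbound; exists (hc t g); last by [].
    by split; [|split].
  have : ((3 * rho / 4)%:E <
      ereal_sup [set (z (fsub (hc t g) fs))%:E | z in Gamma E Psi fs rho])%E.
    by apply: lt_le_trans hD1; rewrite lte_fin; lra.
  case/ereal_sup_gt => _ [z [zd [v [[Ev hv] zv]]] <-]; rewrite lte_fin => hz.
  have zlin := proj1 zd.
  have zh : z (hc t g) = z (fsub (hc t g) fs) + z fs.
    have := zlin 1 1 (fsub (hc t g) fs) fs (E_fsub hE Ehh Efs) Efs.
    have -> : (fun x => 1 * fsub (hc t g) fs x + 1 * fs x) = hc t g.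
      by apply: funext => x; rewrite /fsub; ring.
    by move=> ->; ring.
  have zfs : z fs = z v - z (fsub v fs).
    have := zlin 1 (-1) v (fsub v fs) Ev (E_fsub hE Ev Efs).
    have -> : (fun x => 1 * v x + (-1) * fsub v fs x) = fs.
      by apply: funext => x; rewrite /fsub; ring.
    by move=> ->; ring.
  have h1 := dual_le hE hN zd (E_fsub hE Ev Efs).
  have h2 := dual_le hE hN zd Ehh.
  have h3 := Psi_tri hE hN Efs Ev.
  rewrite (Psi_fsubC hE hN Efs Ev) in h3.
  have trange : 0 <= t <= 1 by rewrite (ltW t0) t1.
  have h4 := Psi_conv hE hN Eg Efs trange.
  lra.
have r2K : 0 <= K * r ^+ 2 by rewrite mulr_ge0 // ltW.
have stepA : forall g, F g -> med fs g + lam * (Psi fs - Psi g) <= K * r ^+ 2.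
  move=> g Fg; have Eg := FE g Fg.
  have tri : Psi fs - Psi g <= Psi (fsub g fs).
    have := Psi_tri hE hN Efs Eg; rewrite (Psi_fsubC hE hN Efs Eg); lra.
  have lt := ler_wpM2l lam0 tri.
  case: (leP (Psi (fsub g fs)) rho) => hp.
    have hm := medUB g Fg _ (lowB g Fg hp).
    have := ler_wpM2l lam0 hp.
    rewrite /K in r2K *; lra.
  have [t [Ti [[t0 t1 tT pE Ti1] [Fhh Phh Lhh conv]]]] := far g Fg hp.
  have Ti0 : 0 <= Ti by apply: le_trans Ti1; exact: ler01.
  have hp' : Psi (fsub (hc t g) fs) <= rho by rewrite Phh.
  rewrite pE in lt.
  have := ler_wpM2r Ti0 lamrho_hi; have := ler_wpM2r Ti0 lamrho_lo => lo hi.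
  have pos1 : 0 <= g1 * r ^+ 2 * Ti by rewrite !mulr_ge0 // ltW.
  have pos2 : 0 <= g2 * r ^+ 2 * Ti by rewrite !mulr_ge0 // ltW.
  case: (leP r (L2norm P X (fsub (hc t g) fs))) => hL.
    have G1 := H1 _ Fhh hp' hL.
    have G2 : Good R [pred j : 'I_n | g1 * r ^+ 2 <= Bstat xs ys (hc t g) fs j].
      apply: Good_mono G1 _ => j /= hj; apply: le_trans hj.
      apply: ler_wpM2l; first exact: ltW.
      have := L2ge0 (hc t g); nra.
    have hm := medUB g Fg _ (conv _ G2).
    lra.
  have hm := medUB g Fg _ (conv _ (lowB _ Fhh hp')).
  have hD := Dl g Fg t (introT andP (conj t0 t1)) Phh (ltW hL).
  have hD' : rho / 2 * Ti <= Psi g - Psi fs.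
    have h := ler_wpM2r Ti0 hD; apply: le_trans h _.
    by rewrite mulrC mulrA tT mul1r.
  have := ler_wpM2l lam0 hD'.
  lra.
have stepB : med ft fs + lam * (Psi ft - Psi fs) <= K * r ^+ 2.
  have hphiA : (phi F Psi lam med fs <= (K * r ^+ 2)%:E)%E.
    by apply: ge_ereal_sup => _ [g Fg <-]; rewrite lee_fin; exact: stepA.
  have h : ((med ft fs + lam * (Psi ft - Psi fs))%:E <= phi F Psi lam med ft)%E.
    by apply: ereal_sup_ubound; exists fs.
  by have := le_trans h (le_trans (hphi fs Ffs) hphiA); rewrite lee_fin.

have K2 : 0 <= 2 * K by rewrite mulr_ge0 // ltW.
have a1p : 0 <= 2 * K / g1 by rewrite divr_ge0 // ltW.
have a2p : 0 <= 2 * K / g2 by rewrite divr_ge0 // ltW.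
have bp : 0 <= g2 / g1 by rewrite divr_ge0 // ltW.
have a1E : g1 * (2 * K / g1) = 2 * K by rewrite mulrC divfK // lt0r_neq0.
have a2E : g2 * (2 * K / g2) = 2 * K by rewrite mulrC divfK // lt0r_neq0.
have bE : g1 * (g2 / g1) = g2 by rewrite mulrC divfK // lt0r_neq0.
have hc1 : [/\ 1 <= c1, 2 * K / g1 <= c1 & 2 * K / g2 <= c1] by rewrite /c1; split; lra.
have hc2 : [/\ 1 + g2 / g1 <= c2, 2 * K / g1 <= c2 & 2 * K / g2 <= c2] by rewrite /c2; split; lra.
case: hc1 => c1_1 c1_a1 c1_a2; case: hc2 => c2_b c2_a1 c2_a2.
have c2_1 : 1 <= c2 by apply: le_trans c2_b; lra.
have c2sq : 1 + g2 / g1 <= c2 ^+ 2.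
  have := ler_wpM2l (le_trans ler01 c2_1) c2_1; rewrite expr2; lra.
have sqb : forall L M : R, 0 <= L -> 0 <= M -> L ^+ 2 <= M ^+ 2 -> L <= M.
  by move=> L M L0 M0 h; rewrite -ler_sqr ?nnegrE.
have Eft := FE ft Fft.
have p0 : 0 <= Psi (fsub ft fs) := Psi_ge0 hN (E_fsub hE Eft Efs).
have triB : - Psi (fsub ft fs) <= Psi ft - Psi fs.
  have := Psi_tri hE hN Efs Eft; rewrite (Psi_fsubC hE hN Efs Eft); lra.
have lamneg := ler_wpM2l lam0 triB.
have medft : med ft fs <= K * r ^+ 2 + lam * Psi (fsub ft fs) by lra.
have Lft0 := L2ge0 ft.
have c2r : 0 <= c2 * r by rewrite mulr_ge0 // ltW; lra.
have stepC : Psi (fsub ft fs) <= c1 * rho /\ L2norm P X (fsub ft fs) <= c2 * r.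
  case: (leP (Psi (fsub ft fs)) rho) => hp.
    split; first by have := ler_wpM2r (ltW rho0) c1_1; lra.
    case: (leP r (L2norm P X (fsub ft fs))) => hL; last first.
      by have := ler_wpM2r (ltW r0) c2_1; lra.
    have hm := medLB ft Fft _ (H1 ft Fft hp hL).
    have := ler_wpM2l lam0 hp => hl.
    have h1 := ler_wpM2r (ltW r2p) (ler_wpM2l (ltW g1p) c2sq).
    rewrite mulrDr mulr1 bE in h1.
    apply: sqb => //.
    have h : g1 * L2norm P X (fsub ft fs) ^+ 2 <= g1 * (c2 * r) ^+ 2.
      rewrite exprMn; rewrite /K in medft hm; lra.
    by rewrite ler_pM2l // in h.
  have [t [Ti [[t0 t1 tT pE Ti1] [Fhh Phh Lhh conv]]]] := far ft Fft hp.
  have Ti0 : 0 <= Ti by apply: le_trans Ti1; exact: ler01.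
  have hp' : Psi (fsub (hc t ft) fs) <= rho by rewrite Phh.
  have := ler_wpM2r Ti0 lamrho_hi; have := ler_wpM2r Ti0 lamrho_lo => lo hi.
  have LE : L2norm P X (fsub ft fs) = Ti * L2norm P X (fsub (hc t ft) fs).
    by rewrite Lhh mulrA tT mul1r.
  rewrite pE in medft *.
  have Lh0 := L2ge0 (hc t ft).
  case: (leP r (L2norm P X (fsub (hc t ft) fs))) => hL.
    have hm := medLB ft Fft _ (conv _ (H1 _ Fhh hp' hL)).
    set Lh := L2norm P X (fsub (hc t ft) fs) in hm hL LE Lh0 *.
    have rL : r ^+ 2 <= Lh ^+ 2 by rewrite ler_sqr ?nnegrE // ltW.
    have h2 := ler_wpM2r Ti0 (ler_wpM2l (ltW g1p) rL).
    have h3 : (g1 / 2 * Ti) * r ^+ 2 <= K * r ^+ 2 by lra.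
    rewrite ler_pM2r // in h3.
    have TiA : Ti <= 2 * K / g1.
      by rewrite -(ler_pM2l g1p) a1E; lra.
    split.
      have := ler_wpM2l (ltW rho0) TiA.
      have := ler_wpM2r (ltW rho0) c1_a1; lra.
    have h4 : g1 * Lh ^+ 2 * Ti <= 2 * K * r ^+ 2 by lra.
    have h5 := ler_wpM2r Ti0 h4.
    have h6 := ler_wpM2r (ltW r2p) (ler_wpM2l K2 TiA).
    have h7 : g1 * L2norm P X (fsub ft fs) ^+ 2 <= g1 * (2 * K / g1 * r) ^+ 2.
      have e : g1 * (2 * K / g1) ^+ 2 = 2 * K * (2 * K / g1) by rewrite expr2 mulrA a1E.
      have eL : g1 * L2norm P X (fsub ft fs) ^+ 2 = g1 * Lh ^+ 2 * Ti * Ti by rewrite LE; ring.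
      have eR : g1 * (2 * K / g1 * r) ^+ 2 = 2 * K * (2 * K / g1) * r ^+ 2.
        by rewrite exprMn -e; ring.
      rewrite eL eR; lra.
    rewrite ler_pM2l // in h7.
    have M0 : 0 <= 2 * K / g1 * r by rewrite mulr_ge0 // ltW.
    apply: le_trans (sqb _ _ Lft0 M0 h7) _.
    by rewrite ler_wpM2r // ltW.
  have hm := medLB ft Fft _ (conv _ (lowB _ Fhh hp')).
  have hD := Dl ft Fft t (introT andP (conj t0 t1)) Phh (ltW hL).
  have hD' : rho / 2 * Ti <= Psi ft - Psi fs.
    have h := ler_wpM2r Ti0 hD; apply: le_trans h _.
    by rewrite mulrC mulrA tT mul1r.
  have := ler_wpM2l lam0 hD' => hl.
  have h3 : (g2 / 2 * Ti) * r ^+ 2 <= K * r ^+ 2 by lra.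
  rewrite ler_pM2r // in h3.
  have TiA : Ti <= 2 * K / g2.
    by rewrite -(ler_pM2l g2p) a2E; lra.
  split.
    have := ler_wpM2l (ltW rho0) TiA.
    have := ler_wpM2r (ltW rho0) c1_a2; lra.
  rewrite LE.
  have := ler_wpM2r (ltW r0) c2_a2.
  have := ler_wpM2r (ltW r0) TiA.
  have := ler_wpM2l Ti0 (ltW hL).
  lra.

case: stepC => C1 C2.
split => //; split => //.
pose S := 2 * (c1 + c2).
have S0 : 0 < S by rewrite /S; lra.
pose s := 1 / S.
have s0 : 0 < s by rewrite /s divr_gt0.
have sS : s * S = 1 by rewrite /s divfK // lt0r_neq0.
have s1 : s <= 1 by rewrite /s ler_pdivrMr // mul1r /S; lra.
have srange : 0 <= s <= 1 by rewrite (ltW s0) s1.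
have Fhs : F (hc s ft) by apply: Fhc.
have Phs : Psi (fsub (hc s ft) fs) = s * Psi (fsub ft fs).
  by rewrite /hc fsub_conv (Psi_scale hN (E_fsub hE Eft Efs) (ltW s0)).
have Phs' : Psi (fsub (hc s ft) fs) <= rho.
  rewrite Phs.
  have h1 := ler_wpM2l (ltW s0) C1.
  have h2 : c1 <= S by rewrite /S; lra.
  have h3 := ler_wpM2r (ltW rho0) (ler_wpM2l (ltW s0) h2).
  rewrite sS in h3; lra.
have Lhs : L2norm P X (fsub (hc s ft) fs) = s * L2norm P X (fsub ft fs).
  by apply: L2hc => //; exact: ltW.
have Lhs' : L2norm P X (fsub (hc s ft) fs) < r.
  rewrite Lhs.
  have h1 := ler_wpM2l (ltW s0) C2.
  have h2 : 2 * c2 <= S by rewrite /S; lra.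
  have h3 := ler_wpM2r (ltW r0) (ler_wpM2l (ltW s0) h2).
  rewrite sS in h3; lra.
have G := H2 _ Fhs Phs' Lhs'.
have [j [hj hB]] := med_low n0 (hmed ft fs Fft Ffs) G.
move: hj => /=; rewrite EME Iud_hc // /hc Ms_scale ler_norml => /andP[hlo _].
have BQ := B_QM xs ys ft fs j; have Q0 := Qs_ge0 xs ft fs j.
have l1 := ler_wpM2l lam0 C1.
have c10 : 0 <= c1 by lra.
have l2 := ler_wpM2l c10 lamrho_hi.
have hM : Mstat xs ys ft fs j <= K * r ^+ 2 + c1 * (g1 / 2 * r ^+ 2) by lra.
have m1 := ler_wpM2l (ltW s0) hM.
have hI : 2 * (s * Iud ft) <= s * (K * r ^+ 2 + c1 * (g1 / 2 * r ^+ 2)) + g2 * r ^+ 2.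
  by lra.
have hI2 := ler_wpM2l (ltW S0) hI.
have e1 : S * (2 * (s * Iud ft)) = 2 * Iud ft * (s * S) by ring.
have e2 : S * (s * (K * r ^+ 2 + c1 * (g1 / 2 * r ^+ 2)) + g2 * r ^+ 2) =
   (K * r ^+ 2 + c1 * (g1 / 2 * r ^+ 2)) * (s * S) + S * (g2 * r ^+ 2) by ring.
rewrite e1 e2 sS !mulr1 in hI2.
have hL : L2norm P X (fsub ft fs) ^+ 2 <= (c2 * r) ^+ 2.
  by rewrite ler_sqr ?nnegrE.
rewrite L2sq exprMn in hL.
rewrite riskE // riskfs -EFinB lee_fin.
rewrite /S in hI2; lra.
Qed.
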